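(* Let $n\ge1$, $k\in[n-1]$, $u,w\in S_n$, and $w_{0,n}=[n,n-1,\dots,1]$. Then $u\xrightarrow[k]{}w$ if and only if $w\,w_{0,n}\xrightarrow{n-k}u\,w_{0,n}$.
   Context: $S_n$ is the symmetric group on $[n]$, with $uv=u\circ v$; $\tau_{i,j}$ is the transposition of $i<j$; $\ell(u)$ is the number of inversions. For $k$, $u\lessdot_k u\tau_{i,j}$ means $i\le k<j$ and $\ell(u\tau_{i,j})=\ell(u)+1$. $u\xrightarrow{k}w$ means there is a chain $u=u_1\lessdot_k\cdots\lessdot_k u_s=w$ ($s\ge1$), $u_{t+1}=u_t\tau_{a_t,b_t}$, with $u_1(a_1)<u_2(a_2)<\cdots<u_{s-1}(a_{s-1})$; equivalently (Sottile) such a chain with $b_1,\dots,b_{s-1}$ pairwise distinct. $u\xrightarrow[k]{}w$ means there is a chain $u=u_1\lessdot_k\cdots\lessdot_k u_s=w$ with $u_{t+1}=u_t\tau_{a_t,b_t}$ and $a_1,\dots,a_{s-1}$ pairwise distinct. *)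

(* Defs.v *)
From mathcomp Require Import all_boot all_fingroup.
Set Implicit Arguments. Unset Strict Implicit. Unset Printing Implicit Defensive.

(* Permutations of [n] are modelled as {perm 'I_n}; position/value i in [n]
   (1-based) corresponds to the ordinal of value i-1.                       *)

Local Open Scope group_scope.

(* Paper's product uv = u o v.  MathComp's (u * v) x = v (u x), so u o v is v * u. *)
Definition pmul n (u v : {perm 'I_n}) : {perm 'I_n} := v * u.

Lemma pmulE n (u v : {perm 'I_n}) x : pmul u v x = u (v x).
Proof. by rewrite /pmul permM. Qed.

Definition swapR n (u : {perm 'I_n}) (a b : 'I_n) : {perm 'I_n} :=
  pmul u (tperm a b).

Definition inv_len n (u : {perm 'I_n}) : nat :=
  #|[set p : 'I_n * 'I_n | (p.1 < p.2)%N && (u p.2 < u p.1)%N]|.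

(* u <._k u tau_{a,b}:  a <= k < b (1-based), l(u tau) = l(u) + 1.
   With 0-based ordinals a, b this reads  a+1 <= k < b+1.                *)
Definition kcover n (k : nat) (u : {perm 'I_n}) (a b : 'I_n) : bool :=
  [&& (a < b)%N, (a.+1 <= k)%N, (k < b.+1)%N &
      inv_len (swapR u a b) == (inv_len u).+1].

(* A chain u = u_1 <._k ... <._k u_s, encoded by its list of steps (a_t, b_t). *)
Fixpoint kchain n (k : nat) (u : {perm 'I_n}) (s : seq ('I_n * 'I_n)) : bool :=
  if s is p :: s' then kcover k u p.1 p.2 && kchain k (swapR u p.1 p.2) s'
  else true.

Fixpoint chain_end n (u : {perm 'I_n}) (s : seq ('I_n * 'I_n)) : {perm 'I_n} :=
  if s is p :: s' then chain_end (swapR u p.1 p.2) s' else u.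

Fixpoint chain_vals n (u : {perm 'I_n}) (s : seq ('I_n * 'I_n)) : seq nat :=
  if s is p :: s' then (nat_of_ord (u p.1)) :: chain_vals (swapR u p.1 p.2) s'
  else [::].

Definition kbruhat_up n (k : nat) (u w : {perm 'I_n}) : Prop :=
  exists s : seq ('I_n * 'I_n),
    [/\ kchain k u s, chain_end u s = w & sorted ltn (chain_vals u s)].

Definition kbruhat_low n (k : nat) (u w : {perm 'I_n}) : Prop :=
  exists s : seq ('I_n * 'I_n),
    [/\ kchain k u s, chain_end u s = w & uniq (map fst s)].

Definition w0 n : {perm 'I_n} := perm (@rev_ord_inj n).

(* Main.v *)
Require Import Defs.
From mathcomp Require Import all_boot all_fingroup zify.
Set Implicit Arguments. Unset Strict Implicit. Unset Printing Implicit Defensive.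

Section Inv.
Variable n : nat.
Implicit Types (v : {perm 'I_n}) (a b c i j : 'I_n).

Definition Fw v i j : nat := ((i < j) && (v j < v i))%N.

Lemma invE v : inv_len v = \sum_i \sum_j Fw v i j.
Proof.
rewrite pair_big /= /inv_len -sum1_card big_mkcond /=.
by apply: eq_bigr => p _; rewrite inE /Fw; case: ifP.
Qed.

Lemma swapRE v a b x : swapR v a b x = v (tperm a b x).
Proof. by rewrite /swapR pmulE. Qed.

Lemma split_sum (F : 'I_n -> 'I_n -> nat) a b : a != b ->
  \sum_i \sum_j F i j = F a a + F b b + F a b + F b a +
   \sum_(c | (c != a) && (c != b)) (F a c + F c a + F b c + F c b) +
   \sum_(i | (i != a) && (i != b)) \sum_(j | (j != a) && (j != b)) F i j.
Proof.
move=> ab.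
have E : forall G : 'I_n -> nat, \sum_i G i = G a + G b + \sum_(i | (i != a) && (i != b)) G i.
  move=> G; rewrite (bigD1 a) //= (bigD1 b) 1?eq_sym //= addnA.
  by congr (_ + _); apply: eq_bigl => i; rewrite andbC.
rewrite E (E (F a)) (E (F b)).
under [X in _ + X = _]eq_bigr => i _ do rewrite E.
rewrite !big_split /=; lia.
Qed.


Lemma swap_inv v a b : (a < b)%N -> (v a < v b)%N ->
  inv_len (swapR v a b) = inv_len v + 1 + 2 * \sum_(c | (c != a) && (c != b))
     ([&& a < c, c < b, v a < v c & v c < v b]%N : nat).
Proof.
move=> ab vab.
have anb : a != b by rewrite neq_ltn ab.
rewrite !invE !(split_sum _ anb).
have Ea : swapR v a b a = v b by rewrite swapRE tpermL.
have Eb : swapR v a b b = v a by rewrite swapRE tpermR.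
have Ec : forall c, (c != a) && (c != b) -> swapR v a b c = v c.
  by move=> c /andP[ca cb]; rewrite swapRE tpermD // eq_sym.
have -> : \sum_(i | (i != a) && (i != b)) \sum_(j | (j != a) && (j != b)) Fw (swapR v a b) i j
   = \sum_(i | (i != a) && (i != b)) \sum_(j | (j != a) && (j != b)) Fw v i j.
  by apply: eq_bigr => i Hi; apply: eq_bigr => j Hj; rewrite /Fw !Ec.
have -> : \sum_(c | (c != a) && (c != b)) (Fw (swapR v a b) a c + Fw (swapR v a b) c a
     + Fw (swapR v a b) b c + Fw (swapR v a b) c b)
   = \sum_(c | (c != a) && (c != b)) ((Fw v a c + Fw v c a + Fw v b c + Fw v c b) +
     2 * ([&& a < c, c < b, v a < v c & v c < v b]%N : nat)).
  apply: eq_bigr => c Hc; rewrite /Fw Ec // Ea Eb.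
  case/andP: Hc => ca cb.
  have vca : v c != v a by rewrite (inj_eq perm_inj).
  have vcb : v c != v b by rewrite (inj_eq perm_inj).
  move: ca cb vca vcb; rewrite -!val_eqE /=.
  case: (ltngtP a c) => [h1|h1|h1]; case: (ltngtP b c) => [h2|h2|h2];
  case: (ltngtP (v a) (v c)) => [h3|h3|h3]; case: (ltngtP (v b) (v c)) => [h4|h4|h4] //=;
  rewrite ?ltnn /=; try lia.
rewrite big_split /= -big_distrr /=.
rewrite /Fw Ea Eb !ltnn /= ab vab (ltnNge b a) (ltnW ab) (ltnNge (v b) (v a)) (ltnW vab) /=.
lia.
Qed.


Lemma swapRK v a b : swapR (swapR v a b) a b = v.
Proof. by apply/permP => x; rewrite !swapRE tpermK. Qed.

Lemma cover_char v a b : (a < b)%N ->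
  (inv_len (swapR v a b) == (inv_len v).+1) =
  (v a < v b)%N && [forall c : 'I_n, ~~ [&& a < c, c < b, v a < v c & v c < v b]%N].
Proof.
move=> ab.
have anb : a != b by rewrite neq_ltn ab.
have vanb : (v a : nat) != v b by rewrite val_eqE (inj_eq perm_inj).
case: (ltngtP (v a) (v b)) vanb => // h _; last first.
  have := @swap_inv (swapR v a b) a b ab.
  rewrite swapRK !swapRE tpermL tpermR => /(_ h) ->.
  apply/negbTE; lia.
rewrite swap_inv // /=.
set S := \sum_(_ | _) _.
transitivity (S == 0); first by apply/eqP/eqP; lia.
rewrite /S sum_nat_eq0; apply/forallP/forallP => H c.
  have := H c; case: (c =P a) => [->|]; first by rewrite ltnn.
  case: (c =P b) => [->|]; first by rewrite ltnn !andbF.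
  by move=> _ _ /= /eqP; case: [&& _, _, _ & _].
by apply/implyP => _; have := H c; case: [&& _, _, _ & _].
Qed.


Lemma swapR_val v a b c :
  swapR v a b c = if c == a then v b else if c == b then v a else v c.
Proof.
rewrite swapRE; case: (c =P a) => [->|/eqP ca]; first by rewrite tpermL.
case: (c =P b) => [->|/eqP cb]; first by rewrite tpermR.
by rewrite tpermD // eq_sym.
Qed.

Lemma coverP k v a b : kcover k v a b ->
  [/\ (a < b)%N, (a < k)%N, (k <= b)%N, (v a < v b)%N &
      forall c : 'I_n, (a < c)%N -> (c < b)%N -> ~~ ((v a < v c)%N && (v c < v b)%N)].
Proof.
case/and4P => ab ak kb; rewrite cover_char // => /andP[vab /forallP H].
split => // c ac cb; have := H c; by rewrite ac cb.
Qed.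

Lemma coverI k v a b : (a < b)%N -> (a < k)%N -> (k <= b)%N -> (v a < v b)%N ->
  (forall c : 'I_n, (a < c)%N -> (c < b)%N -> ~~ ((v a < v c)%N && (v c < v b)%N)) ->
  kcover k v a b.
Proof.
move=> ab ak kb vab H; apply/and4P; split => //; rewrite cover_char // vab /=.
apply/forallP => c; case: (ltnP a c) => //= ac; case: (ltnP c b) => //= cb.
by have := H c ac cb; case: (_ && _).
Qed.

Lemma tpermC4 (a b a' b' x : 'I_n) : a != a' -> a != b' -> b != a' -> b != b' ->
  tperm a b (tperm a' b' x) = tperm a' b' (tperm a b x).
Proof.
move=> h1 h2 h3 h4.
have h1' : a' != a by rewrite eq_sym.
have h2' : b' != a by rewrite eq_sym.
have h3' : a' != b by rewrite eq_sym.
have h4' : b' != b by rewrite eq_sym.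
case: (x =P a) => [->|/eqP xa].
  by rewrite (tpermD h1' h2') tpermL tpermD.
case: (x =P b) => [->|/eqP xb].
  by rewrite (tpermD h3' h4') tpermR tpermD.
have xa1 : a != x by rewrite eq_sym.
have xb1 : b != x by rewrite eq_sym.
rewrite [tperm a b x]tpermD //.
case: (x =P a') => [->|/eqP xa'].
  by rewrite tpermL tpermD.
case: (x =P b') => [->|/eqP xb'].
  by rewrite tpermR tpermD.
have xa2 : a' != x by rewrite eq_sym.
have xb2 : b' != x by rewrite eq_sym.
by rewrite tpermD // tpermD.
Qed.

Lemma exchange k v (a b a' b' : 'I_n) :
  kcover k v a b -> kcover k (swapR v a b) a' b' -> a != a' -> (v a < v a')%N ->
  [/\ kcover k v a' b', kcover k (swapR v a' b') a b &
      swapR (swapR v a' b') a b = swapR (swapR v a b) a' b'].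
Proof.
move=> /coverP[ab ak kb vab H1] /coverP[ab' ak' kb' vab' H2] aa' va.
have a'a : a' != a by rewrite eq_sym.
have a'b : a' != b by rewrite neq_ltn (leq_trans ak' kb).
have ab'n : a != b' by rewrite neq_ltn (leq_trans ak kb').
have bb'a : b != a' by rewrite eq_sym.
have b'a : b' != a by rewrite eq_sym.
move: vab' H2; rewrite !swapR_val (negbTE a'a) (negbTE a'b) (negbTE b'a).
case: (b' =P b) => [-> /=|/eqP b'b]; first by move=> h; exfalso; lia.
move=> vab' H2.
have H2' : forall c : 'I_n, (a' < c)%N -> (c < b')%N -> c != a -> c != b ->
   ~~ ((v a' < v c)%N && (v c < v b')%N).
  by move=> c h1 h2 ca cb; have := H2 c h1 h2; rewrite !swapR_val (negbTE ca) (negbTE cb).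
have H2a : (a' < a)%N -> ~~ ((v a' < v b)%N && (v b < v b')%N).
  by move=> h; have := H2 a h (leq_trans ak kb'); rewrite !swapR_val eqxx.
have vbb' : (v b' : nat) != v b by rewrite val_eqE (inj_eq perm_inj).
have bb' : b != b' by rewrite eq_sym.
have aa'n : (a : nat) != a' by [].
split.
- apply: coverI => // c h1 h2.
  case: (c =P a) => [->|/eqP ca]; first by lia.
  case: (c =P b) => [->|/eqP cb]; last by apply: H2'.
  case: (ltngtP a a') aa'n => // h _.
    by have := H1 a' h (leq_trans ak' kb); lia.
  by have := H2a h; lia.
- apply: coverI => //; rewrite !swapR_val (negbTE ab'n) eq_sym (negbTE a'a) (negbTE bb'a) (negbTE bb') //.
  move=> c h1 h2; rewrite swapR_val.
  case: (c =P a') h1 h2 => [-> h1 h2|/eqP ca' h1 h2].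
    by have := H1 a' h1 h2; lia.
  case: (c =P b') h1 h2 => [-> h1 h2|/eqP cb' h1 h2].
    have b'a' : b' != a' by rewrite neq_ltn ab' orbT.
    try rewrite (negbTE b'a').
    case: (ltngtP a a') aa'n => // h _.
      by have := H1 a' h (leq_trans ak' kb); lia.
    by have := H2a h; have := H1 b' h1 h2; lia.
  exact: H1.
- by apply/permP => x; rewrite !swapRE tpermC4.
Qed.


Lemma insert_step k (rest : seq ('I_n * 'I_n)) : forall v (p : 'I_n * 'I_n) m,
  kcover k v p.1 p.2 -> kchain k (swapR v p.1 p.2) rest ->
  p.1 \notin map fst rest -> (v p.1 < m)%N ->
  path gtn m (chain_vals (swapR v p.1 p.2) rest) ->
  exists s', [/\ kchain k v s', chain_end v s' = chain_end (swapR v p.1 p.2) rest,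
     path gtn m (chain_vals v s') & perm_eq (map fst s') (p.1 :: map fst rest)].
Proof.
elim: rest => [|q rest0 IH] v p m Hp Hc Hn Hm Hpath.
  by exists [:: p]; rewrite /= Hp Hm.
move: Hc Hn Hpath => /= /andP[Hq Hc]; rewrite inE negb_or => /andP[pq Hn] /andP[Hmq Hpath].
have [_ qk _ _ _] := coverP Hq.
have [_ _ kp _ _] := coverP Hp.
have qp2 : q.1 != p.2 by rewrite neq_ltn (leq_trans qk kp).
have pq' : q.1 != p.1 by rewrite eq_sym.
have Eq : swapR v p.1 p.2 q.1 = v q.1 by rewrite swapR_val (negbTE pq') (negbTE qp2).
have vne : (v p.1 : nat) != v q.1 by rewrite val_eqE (inj_eq perm_inj) eq_sym.
case: (ltngtP (v p.1) (v q.1)) vne => // hv _; last first.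
  exists (p :: q :: rest0); rewrite /= Hp Hq Hc Hm /= Eq hv /= -Eq Hpath.
  by split.
have [C1 C2 E] := exchange Hp Hq pq hv.
have pq2 : p.1 != q.2.
  by have [_ _ kq _ _] := coverP Hq; rewrite neq_ltn (leq_trans _ kq) //; have [] := coverP Hp.
have Ep : swapR v q.1 q.2 p.1 = v p.1 by rewrite swapR_val (negbTE pq) (negbTE pq2).
rewrite Eq in Hpath Hmq.
have := IH (swapR v q.1 q.2) p (v q.1) C2; rewrite E Ep.
move=> /(_ Hc Hn hv Hpath) [s'' [K1 K2 K3 K4]].
exists (q :: s''); split => //=.
- by rewrite C1.
- by rewrite Hmq.
- by rewrite -(perm_cons q.1) in K4; apply: (perm_trans K4); rewrite (perm_catCA [:: q.1] [:: p.1]).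
Qed.


Lemma sort_chain k (s : seq ('I_n * 'I_n)) : forall v,
  kchain k v s -> uniq (map fst s) ->
  exists s', [/\ kchain k v s', chain_end v s' = chain_end v s,
     path gtn n (chain_vals v s') & perm_eq (map fst s') (map fst s)].
Proof.
elim: s => [|p rest IH] v; first by exists [::].
move=> /= /andP[Hp Hc] /andP[Hn Hu].
have [r' [R1 R2 R3 R4]] := IH _ Hc Hu.
have Hn' : p.1 \notin map fst r' by rewrite (perm_mem R4).
have [s' [S1 S2 S3 S4]] := insert_step Hp R1 Hn' (ltn_ord _) R3.
exists s'; split => //; first by rewrite S2.
by apply: (perm_trans S4); rewrite perm_cons.
Qed.

Lemma step_mono k v (a b i : 'I_n) : kcover k v a b -> (i < k)%N ->
  (v i <= swapR v a b i)%N.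
Proof.
move=> /coverP[ab ak kb vab _] ik; rewrite swapR_val.
case: (i =P a) => [->|_]; first exact: ltnW.
case: (i =P b) => [eib|_] //; by exfalso; rewrite eib in ik; lia.
Qed.

Lemma chain_mem_lt k (s : seq ('I_n * 'I_n)) : forall v,
  kchain k v s -> forall q, q \in s -> (q.1 < k)%N.
Proof.
elim: s => [|p rest IH] v //= /andP[Hp Hc] q; rewrite inE => /orP[/eqP ->|].
  by have [] := coverP Hp.
exact: IH Hc q.
Qed.

Lemma vals_bound k (s : seq ('I_n * 'I_n)) : forall v m,
  kchain k v s -> path gtn m (chain_vals v s) ->
  forall q, q \in s -> (v q.1 < m)%N.
Proof.
elim: s => [|p rest IH] v m //= /andP[Hp Hc] /andP[Hm Hpath] q.
rewrite inE => /orP[/eqP -> //|qin].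
have := IH _ _ Hc Hpath q qin.
have := step_mono Hp (chain_mem_lt Hc qin).
move: Hm; rewrite /gtn /=; lia.
Qed.

Lemma dec_uniq k (s : seq ('I_n * 'I_n)) : forall v m,
  kchain k v s -> path gtn m (chain_vals v s) -> uniq (map fst s).
Proof.
elim: s => [|p rest IH] v m //= /andP[Hp Hc] /andP[Hm Hpath].
rewrite (IH _ _ Hc Hpath) andbT; apply/mapP => -[q qin Eq].
have := vals_bound Hc Hpath qin; rewrite -Eq swapR_val eqxx.
have [_ _ _ vab _] := coverP Hp; lia.
Qed.


Definition Rv v := pmul v (w0 n).
Definition rvp (p : 'I_n * 'I_n) := (rev_ord p.2, rev_ord p.1).

Lemma RvE v x : Rv v x = v (rev_ord x).
Proof. by rewrite /Rv pmulE /w0 permE. Qed.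

Lemma RvK v : Rv (Rv v) = v.
Proof. by apply/permP => x; rewrite !RvE rev_ordK. Qed.

Lemma R_swap v a b : Rv (swapR v a b) = swapR (Rv v) (rev_ord b) (rev_ord a).
Proof.
apply/permP => x; rewrite RvE !swapRE RvE; congr (v _).
case: (tpermP (rev_ord b) (rev_ord a) x) => [->|->|h1 h2].
- by rewrite !rev_ordK tpermR.
- by rewrite !rev_ordK tpermL.
rewrite tpermD //.
  by apply/eqP => E; apply: h2; rewrite E rev_ordK.
by apply/eqP => E; apply: h1; rewrite E rev_ordK.
Qed.

Lemma inv_R v : inv_len (Rv v) + inv_len v = \sum_(i : 'I_n) \sum_(j : 'I_n) ((i < j)%N : nat).
Proof.
rewrite !invE !pair_big /=.
rewrite (reindex_inj (h := rvp)); last first.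
  by apply: (can_inj (g := rvp)) => -[x y]; rewrite /rvp /= !rev_ordK.
rewrite -big_split /=; apply: eq_bigr => -[i j] _ /=.
rewrite /Fw /= !RvE !rev_ordK.
have ne : (i : nat) != j -> (v i : nat) != v j.
  by rewrite !val_eqE (inj_eq perm_inj).
have ij : (i : nat) != j -> (v i : nat) != v j by [].
case: (ltngtP i j) ne => h ne.
  have -> : (n - j.+1 < n - i.+1)%N by have := ltn_ord j; lia.
  have := ne isT; case: (ltngtP (v i) (v j)) => //.
- have -> : (n - j.+1 < n - i.+1)%N = false by apply/negbTE; have := ltn_ord i; lia.
  by [].
- by move/val_inj: h => ->; rewrite ltnn.
Qed.


Lemma cover_rev K v a b : kcover K v a b ->
  kcover (n - K) (Rv (swapR v a b)) (rev_ord b) (rev_ord a).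
Proof.
case/and4P => ab ak kb /eqP E.
have E2 := inv_R v; have E3 := inv_R (swapR v a b).
have E4 : swapR (Rv (swapR v a b)) (rev_ord b) (rev_ord a) = Rv v by rewrite -R_swap swapRK.
apply/and4P; split => /=.
- have := ltn_ord b; lia.
- have := ltn_ord b; lia.
- have := ltn_ord b; lia.
- rewrite E4; apply/eqP; lia.
Qed.

Lemma kchain_rcons k u (s : seq ('I_n * 'I_n)) x :
  kchain k u (rcons s x) = kchain k u s && kcover k (chain_end u s) x.1 x.2.
Proof. by elim: s u => [|p s IH] u /=; rewrite ?andbT // IH andbA. Qed.

Lemma chain_end_rcons u (s : seq ('I_n * 'I_n)) x :
  chain_end u (rcons s x) = swapR (chain_end u s) x.1 x.2.
Proof. by elim: s u => [|p s IH] u /=. Qed.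

Lemma chain_vals_rcons u (s : seq ('I_n * 'I_n)) x :
  chain_vals u (rcons s x) = rcons (chain_vals u s) (nat_of_ord (chain_end u s x.1)).
Proof. by elim: s u => [|p s IH] u /=; rewrite ?IH. Qed.

Lemma chain_rev K (s : seq ('I_n * 'I_n)) : forall v, kchain K v s ->
  [/\ kchain (n - K) (Rv (chain_end v s)) (rev (map rvp s)),
      chain_end (Rv (chain_end v s)) (rev (map rvp s)) = Rv v &
      chain_vals (Rv (chain_end v s)) (rev (map rvp s)) = rev (chain_vals v s)].
Proof.
elim: s => [|p rest IH] v /=; first by [].
case/andP => Hp Hc; have [A1 A2 A3] := IH _ Hc.
rewrite !rev_cons kchain_rcons chain_end_rcons chain_vals_rcons A1 A2 A3 /=.
split.
- exact: cover_rev.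
- by rewrite -R_swap swapRK.
- by rewrite RvE rev_ordK swapR_val eqxx; case: (p.2 =P p.1) => [->|].
Qed.
End Inv.
Lemma vals_size n (u : {perm 'I_n}) s : size (chain_vals u s) = size s.
Proof. by elim: s u => [|p s IH] u //=; rewrite IH. Qed.

Theorem lemma2p31 (n k : nat) (u w : {perm 'I_n}) :
  (1 <= n)%N -> (1 <= k)%N -> (k <= n - 1)%N ->
  (kbruhat_low k u w <-> kbruhat_up (n - k) (pmul w (w0 n)) (pmul u (w0 n))).
Proof.
move=> n1 k1 kn; split.
- case=> s [Hc He Hu].
  have [s' [S1 S2 S3 _]] := sort_chain Hc Hu.
  have [R1 R2 R3] := chain_rev S1.
  exists (rev (map (@rvp n) s')); rewrite S2 He in R1 R2 R3; split => //.
  rewrite R3 rev_sorted.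
  by case: (chain_vals u s') S3 => //= x l /andP[].
- case=> s [Hc He Hs].
  have [R1 R2 R3] := chain_rev Hc.
  have Ek : n - (n - k) = k by lia.
  rewrite He Ek !RvK in R1 R2 R3.
  exists (rev (map (@rvp n) s)); split => //.
  move: R3; set s2 := rev _ => R3.
  have : sorted gtn (chain_vals u s2) by rewrite R3 rev_sorted.
  case E: (chain_vals u s2) => [|x l] Hsort.
    have Hsz : size s2 = 0 by rewrite -(vals_size u) E.
    by rewrite (size0nil Hsz).
  apply: (@dec_uniq n k s2 u x.+1 R1); rewrite E /= ltnSn.
  exact: Hsort.
Qed.
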